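(* Let $q\in\mathbb{C}^*$, $\lambda\in\mathbb{C}^*$, $a,b\in\mathbb{C}$, and let $\lambda^{\frac12}$ denote a square root of $\lambda$. Then $\Omega_{\mathcal{L}}(\lambda,a,b)\cong\Omega_{\mathcal{R}}(\lambda^{\frac12},a,2b)$ as $\mathcal{L}$-modules, where $\Omega_{\mathcal{R}}(\lambda^{\frac12},a,2b)$ is regarded as an $\mathcal{L}$-module via $\tau$.
   Context: Let $\mathbb{Z}_+=\{0,1,2,\dots\}$. For $s\in\{0,\frac12\}$ let $S(q)$ be the Lie superalgebra over $\mathbb{C}$ with even basis $\{L_{m,i}\mid m\in\mathbb{Z},i\in\mathbb{Z}_+\}$, odd basis $\{G_{l,j}\mid l\in s+\mathbb{Z},j\in\mathbb{Z}_+\}$ and brackets $[L_{m,i},L_{n,j}]=(n(i+q)-m(j+q))L_{m+n,i+j}$, $[L_{m,i},G_{l,j}]=(l(i+q)-m(j+\frac{q}{2}))G_{m+l,i+j}$, $[G_{l,i},G_{r,j}]=2qL_{l+r,i+j}$. For $s=0$ this is $\mathcal{R}$ (Ramond-Block), for $s=\frac12$ it is $\mathcal{L}$ (Neveu-Schwarz-Block), with the same $q$. $\tau:\mathcal{L}\to\mathcal{R}$ is the injective Lie superalgebra homomorphism with $\tau(L_{m,i})=\frac12L_{2m,i}$, $\tau(G_{r,j})=\frac{1}{\sqrt2}G_{2r,j}$. Modules are supermodules; $\delta$ is the Kronecker delta. For $\nu\in\mathbb{C}^*$, $a,c\in\mathbb{C}$, $\Omega_{\mathcal{R}}(\nu,a,c)=\mathbb{C}[t^2]\oplus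 t\mathbb{C}[t^2]$ (even part $\mathbb{C}[t^2]$, odd part $t\mathbb{C}[t^2]$) is the $\mathcal{R}$-module with, for $f\in\mathbb{C}[t^2]$, $m\in\mathbb{Z}$, $i\in\mathbb{Z}_+$: $L_{m,i}f(t^2)=\nu^m(\delta_{i,0}(t^2-mqa)+\delta_{q,-1}\delta_{i,1}c)f(t^2-mq)$; $L_{m,i}tf(t^2)=\nu^m t(\delta_{i,0}(t^2-mqa-\frac{mq}{2})+\delta_{q,-1}\delta_{i,1}c)f(t^2-mq)$; $G_{m,i}f(t^2)=\nu^m\delta_{i,0}tf(t^2-mq)$; $G_{m,i}tf(t^2)=q\nu^m(\delta_{i,0}(t^2-2mqa)+2\delta_{q,-1}\delta_{i,1}c)f(t^2-mq)$. For $\lambda\in\mathbb{C}^*$, $a,b\in\mathbb{C}$, $\Omega_{\mathcal{L}}(\lambda,a,b)=\mathbb{C}[t]\oplus\mathbb{C}[x]$ (even part $\mathbb{C}[t]$, odd part $\mathbb{C}[x]$) is the $\mathcal{L}$-module with, for $f\in\mathbb{C}[t]$, $g\in\mathbb{C}[x]$, $m\in\mathbb{Z}$, $r\in\frac12+\mathbb{Z}$, $i\in\mathbb{Z}_+$: $L_{m,i}f(t)=\lambda^m(\delta_{i,0}(t-mqa)+\delta_{q,-1}\delta_{i,1}b)f(t-mq)$; $L_{m,i}g(x)=\lambda^m(\delta_{i,0}(x-mqa-\frac{mq}{2})+\delta_{q,-1}\delta_{i,1}b)g(x-mq)$; $G_{r,i}f(t)=\lambda^{r-\frac12}\delta_{i,0}f(x-rq)$;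 $G_{r,i}g(x)=q\lambda^{r+\frac12}(\delta_{i,0}(t-2rqa)+2\delta_{q,-1}\delta_{i,1}b)g(t-rq)$. *)

(* Defs.v *)
From HB Require Import structures.
From mathcomp Require Import all_boot all_order all_algebra.
From mathcomp Require Import complex.
From mathcomp Require Import reals Rstruct.
Set Implicit Arguments. Unset Strict Implicit. Unset Printing Implicit Defensive.
Import Order.TTheory GRing.Theory Num.Theory.
Local Open Scope ring_scope.

Notation C := (Rdefinitions.R)[i].

Definition delta (b : bool) : C := b%:R.

Definition shift (s : C) (f : {poly C}) : {poly C} := f \Po ('X - s%:P).

(* Both modules have underlying superspace {poly C} * {poly C}:
   first component = even part, second = odd part.
   For Omega_R(nu,a,c) a pair (f,g) represents f(t^2) + t g(t^2)
   (f, g written as polynomials in the variable T = t^2).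
   For Omega_L(lambda,a,b) a pair (f,g) represents f(t) + g(x). *)
Definition smod : Type := ({poly C} * {poly C})%type.

Definition OmR_L (q nu a c : C) (m : int) (i : nat) (v : smod) : smod :=
  (nu ^ m *: ((delta (i == 0%N) *: ('X - (m%:~R * q * a)%:P)
               + (delta (q == -1) * delta (i == 1%N) * c)%:P) * shift (m%:~R * q) v.1),
   nu ^ m *: ((delta (i == 0%N) *: ('X - (m%:~R * q * a + m%:~R * q / 2)%:P)
               + (delta (q == -1) * delta (i == 1%N) * c)%:P) * shift (m%:~R * q) v.2)).

Definition OmR_G (q nu a c : C) (m : int) (i : nat) (v : smod) : smod :=
  (q * nu ^ m *: ((delta (i == 0%N) *: ('X - (2 * m%:~R * q * a)%:P)
               + (2 * delta (q == -1) * delta (i == 1%N) * c)%:P) * shift (m%:~R * q) v.2),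
   nu ^ m * delta (i == 0%N) *: shift (m%:~R * q) v.1).

Definition OmL_L (q lam a b : C) (m : int) (i : nat) (v : smod) : smod :=
  (lam ^ m *: ((delta (i == 0%N) *: ('X - (m%:~R * q * a)%:P)
               + (delta (q == -1) * delta (i == 1%N) * b)%:P) * shift (m%:~R * q) v.1),
   lam ^ m *: ((delta (i == 0%N) *: ('X - (m%:~R * q * a + m%:~R * q / 2)%:P)
               + (delta (q == -1) * delta (i == 1%N) * b)%:P) * shift (m%:~R * q) v.2)).

(* G_{r,i} with r = k + 1/2, k in Z  (so r - 1/2 = k, r + 1/2 = k + 1) *)
Definition OmL_G (q lam a b : C) (k : int) (i : nat) (v : smod) : smod :=
  let r : C := k%:~R + 2^-1 in
  (q * lam ^ (k + 1) *: ((delta (i == 0%N) *: ('X - (2 * r * q * a)%:P)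
               + (2 * delta (q == -1) * delta (i == 1%N) * b)%:P) * shift (r * q) v.2),
   lam ^ k * delta (i == 0%N) *: shift (r * q) v.1).

(* tau(L_{m,i}) = 1/2 L_{2m,i},  tau(G_{r,j}) = 1/sqrt2 G_{2r,j}, 2r = 2k+1 *)
Definition tauOmR_L (q nu a c : C) (m : int) (i : nat) (v : smod) : smod :=
  let w := OmR_L q nu a c (2 * m) i v in (2^-1 *: w.1, 2^-1 *: w.2).

Definition tauOmR_G (q nu a c : C) (k : int) (i : nat) (v : smod) : smod :=
  let w := OmR_G q nu a c (2 * k + 1) i v in ((sqrtC 2)^-1 *: w.1, (sqrtC 2)^-1 *: w.2).

Definition clinear (f : {poly C} -> {poly C}) : Prop :=
  forall (s : C) (u w : {poly C}), f (s *: u + w) = s *: f u + f w.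

Definition L_iso
  (L1 G1 L2 G2 : int -> nat -> smod -> smod) : Prop :=
  exists (phi0 phi1 : {poly C} -> {poly C}),
    [/\ clinear phi0 /\ clinear phi1, bijective phi0, bijective phi1,
        (forall m i v, (phi0 (L1 m i v).1, phi1 (L1 m i v).2)
                       = L2 m i (phi0 v.1, phi1 v.2)) &
        (forall k i v, (phi0 (G1 k i v).1, phi1 (G1 k i v).2)
                       = G2 k i (phi0 v.1, phi1 v.2))].

(* Main.v *)
Require Import Defs.
From mathcomp Require Import all_boot all_order all_algebra complex reals Rstruct.
From mathcomp Require Import ring lra.
Import GRing.Theory Num.Theory.
Local Open Scope ring_scope.

Lemma two_neq0 : (2 : C) != 0. Proof. by rewrite pnatr_eq0. Qed.

Definition hX : {poly C} := 2^-1 *: 'X.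
Definition ph (f : {poly C}) : {poly C} := f \Po hX.

Lemma ph_lin : clinear ph.
Proof. by move=> s u w; rewrite /ph comp_polyD comp_polyZ. Qed.

Lemma ph_bij : bijective ph.
Proof.
exists (fun f => f \Po (2 *: 'X)) => f; rewrite /ph -comp_polyA.
- rewrite /hX comp_polyZ comp_polyX scalerA mulrC mulfV ?two_neq0 // scale1r.
  by rewrite comp_polyXr.
- rewrite /hX comp_polyZ comp_polyX scalerA mulfV ?two_neq0 // scale1r.
  by rewrite comp_polyXr.
Qed.

Lemma ph_shift t s f : t = 2 * s -> shift t (ph f) = ph (shift s f).
Proof.
move=> ->; rewrite /ph /shift -!comp_polyA; congr (f \Po _).
rewrite /hX comp_polyZ comp_polyX comp_polyB comp_polyX comp_polyC.
by rewrite scalerBr scale_polyC mulrA mulVf ?two_neq0 // mul1r.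
Qed.

Lemma ph_M p r : ph (p * r) = ph p * ph r.
Proof. by rewrite /ph comp_polyM. Qed.
Lemma ph_Z c p : ph (c *: p) = c *: ph p.
Proof. by rewrite /ph comp_polyZ. Qed.
Lemma ph_D p r : ph (p + r) = ph p + ph r.
Proof. by rewrite /ph comp_polyD. Qed.
Lemma ph_B p r : ph (p - r) = ph p - ph r.
Proof. by rewrite /ph comp_polyB. Qed.
Lemma ph_N p : ph (- p) = - ph p.
Proof. exact: (raddfN (comp_poly hX)). Qed.
Lemma key (x y : C) (P Q F : {poly C}) : x *: P = y *: Q -> x *: (P * F) = y *: (Q * F).
Proof. by rewrite !scalerAl => ->. Qed.
Lemma mulZr (c : C) (P F : {poly C}) : P * (c *: F) = c *: (P * F).
Proof. by rewrite scalerAr. Qed.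
Lemma key2 (x y c : C) (P Q F : {poly C}) : x *: P = (y * c) *: Q -> x *: (P * F) = y *: (Q * (c *: F)).
Proof. by rewrite -scalerAr !scalerA !scalerAl => ->. Qed.
Lemma ph_C c : ph c%:P = c%:P.
Proof. by rewrite /ph comp_polyC. Qed.
Lemma ph_X : ph 'X = 2^-1 *: 'X.
Proof. by rewrite /ph comp_polyX. Qed.

Lemma polyXC_eq (a b c d : C) : a = c -> b = d -> a *: 'X + b%:P = c *: 'X + d%:P.
Proof. by move=> -> ->. Qed.

Ltac solveP := apply/polyP; case => [|[|?]]; rewrite !(coefZ, coefD, coefB, coefN, coefX, coefC) ?intrM ?intrD /=; field; rewrite ?two_neq0 //.

Theorem proposition4p3 (q lam a b mu : C) :
  q != 0 -> lam != 0 -> mu ^+ 2 = lam ->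
  L_iso (OmL_L q lam a b) (OmL_G q lam a b)
        (tauOmR_L q mu a (2 * b)) (tauOmR_G q mu a (2 * b)).
Proof.
move=> qn0 ln0 mul.
have mun0 : mu != 0 by apply: contraNneq ln0 => m0; rewrite -mul m0 expr0n.
have s2sq : sqrtC (2:C) ^+ 2 = 2 by rewrite sqrtCK.
have s2n0 : sqrtC (2:C) != 0.
  apply/eqP => e; move: s2sq; rewrite e expr0n => /eqP; by rewrite eq_sym pnatr_eq0.
have pw m : mu ^ (2 * m) = lam ^ m.
  by rewrite -exprz_exp -mul exprnP.
pose c := mu / sqrtC (2:C).
have cn0 : c != 0 by rewrite mulf_neq0 ?invr_eq0.
exists ph, (fun g => c *: ph g); split.
- split; first exact: ph_lin.
  by move=> s u w; rewrite ph_lin scalerDr !scalerA mulrC.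
- exact: ph_bij.
- case: ph_bij => g h1 h2; exists (fun f => g (c^-1 *: f)) => f.
    by rewrite scalerA mulVf // scale1r h1.
  by rewrite h2 scalerA mulfV // scale1r.
- move=> m i [f g] /=.
  rewrite /tauOmR_L /OmR_L /= /shift comp_polyZ -!/(shift _ _).
  rewrite !(ph_shift _ (m%:~R * q)); last 2 first.
  + by rewrite intrM; ring.
  + by rewrite intrM; ring.
  rewrite !(ph_Z, ph_M, ph_B, ph_D, ph_N, ph_C, ph_X) pw.
  congr (_, _).
  + rewrite [RHS]scalerA; apply: key.
    solveP.
  + rewrite [LHS]scalerA [RHS]scalerA; apply: key2.
    rewrite /c.
    solveP.
- move=> k i [f g] /=.
  rewrite /tauOmR_G /OmR_G /OmL_G /= /shift comp_polyZ -!/(shift _ _).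
  rewrite !(ph_shift _ ((k%:~R + 2^-1) * q)); last 2 first.
  + by rewrite intrD intrM; field.
  + by rewrite intrD intrM; field.
  rewrite !(ph_Z, ph_M, ph_B, ph_D, ph_N, ph_C, ph_X).
  rewrite (expfzDr _ _ ln0) (expfzDr _ _ mun0) pw !expr1z.
  have hs : (sqrtC (2:C))^-1 * (sqrtC 2)^-1 = 2^-1 by rewrite -expr2 exprVn s2sq.
  have hsc z : (sqrtC (2:C))^-1 * z * c = z * mu / 2.
    by rewrite /c -hs; ring.
  congr (_, _).
  + rewrite [RHS]scalerA; apply: key2.
    rewrite hsc -mul.
    solveP.
  + rewrite !scalerA; congr (_ *: _); rewrite /c; ring.
Qed.
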